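(* Let $\beta=\gamma=\eta=1$. Let Assumptions A1, A2 and A3 hold with $\varepsilon_0=\varepsilon\le1$. Let $T\in\mathbb{N}$ satisfy $T\le\frac{1}{2\varepsilon^2}$, and let $R\ge2\|r_0\|(\sqrt T+2\varepsilon T^2)$. Then for all $\tau\le T$: $$\|\theta_\tau-\theta_0\|\le\tfrac R2,\qquad \|\tilde r_\tau-r_\tau\|\le4\varepsilon\tau\|r_0\|,\qquad \|\tilde\theta_\tau-\theta_\tau\|\le2\varepsilon\tau^2\|r_0\|.$$
   Context: Norms: $\|\cdot\|$ is the Euclidean norm for vectors and the spectral norm for matrices. Setting. Let $f:\mathbb{R}^N\to\mathbb{R}^n$ be continuously differentiable with Jacobian $\mathcal{J}(\theta)\in\mathbb{R}^{n\times N}$. Let $A\in\mathbb{R}^{m\times n}$ and let $\gamma\ge\|A\|$. Fix $y\in\mathbb{R}^m$, a starting point $\theta_0\in\mathbb{R}^N$, and a fixed deterministic ''reference Jacobian'' $J\in\mathbb{R}^{n\times N}$. Iterations. Gradient descent with step size $\eta>0$ is applied to $\mathcal{L}(\theta)=\frac12\|Af(\theta)-y\|^2$ and to $\mathcal{L}_{\rm lin}(\theta)=\frac12\|Af(\theta_0)+AJ(\theta-\theta_0)-y\|^2$, both started at $\theta_0=\tilde\theta_0$: $$\theta_{\tau+1}=\theta_\tau-\eta\mathcal{J}(\theta_\tau)^\top A^\top r_\tau,\qquad r_\tau:=Af(\theta_\tau)-y,$$ $$\tilde\theta_{\tau+1}=\tilde\theta_\tau-\eta J^\top A^\top\tilde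 r_\tau,\qquad \tilde r_\tau:=Af(\theta_0)+AJ(\tilde\theta_\tau-\theta_0)-y.$$ Assumption A1: there is $\beta>0$ with $\|J\|\le\beta$ and $\|\mathcal{J}(\theta)\|\le\beta$ for all $\theta\in\mathbb{R}^N$. Assumption A2: there is $\varepsilon_0>0$ with $\|\mathcal{J}(\theta_0)-J\|\le\varepsilon_0$ and $\|\mathcal{J}(\theta_0)\mathcal{J}(\theta_0)^\top-JJ^\top\|\le\varepsilon_0^2$. Assumption A3: there are $\varepsilon>0$ and $R>0$ with $\|\mathcal{J}(\theta)-\mathcal{J}(\theta_0)\|\le\varepsilon/2$ for all $\theta$ satisfying $\|\theta-\theta_0\|\le R$. *)

(* Defs.v *)
From HB Require Import structures.
From mathcomp Require Import all_boot all_order all_algebra.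
From mathcomp Require Import all_classical all_reals all_analysis.
Set Implicit Arguments. Unset Strict Implicit. Unset Printing Implicit Defensive.
Import Order.TTheory GRing.Theory Num.Theory.
Import numFieldNormedType.Exports.
Local Open Scope classical_set_scope.
Local Open Scope ring_scope.

Definition enorm (R : realType) (k : nat) (v : 'cV[R]_k) : R :=
  Num.sqrt (\sum_(i < k) v i 0 ^+ 2).

Definition specnorm (R : realType) (p q : nat) (M : 'M[R]_(p, q)) : R :=
  sup [set enorm (M *m v) | v in [set v : 'cV[R]_q | enorm v <= 1]].

Definition resid (R : realType) (N n m : nat) (f : 'cV[R]_N -> 'cV[R]_n)
  (A : 'M[R]_(m, n)) (y : 'cV[R]_m) (th : 'cV[R]_N) : 'cV[R]_m :=
  A *m f th - y.

(* gradient descent on L(theta) = 1/2 |A f(theta) - y|^2 *)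
Fixpoint gd_iter (R : realType) (N n m : nat) (f : 'cV[R]_N -> 'cV[R]_n)
  (Jf : 'cV[R]_N -> 'M[R]_(n, N)) (A : 'M[R]_(m, n)) (y : 'cV[R]_m)
  (eta : R) (th0 : 'cV[R]_N) (t : nat) : 'cV[R]_N :=
  match t with
  | 0 => th0
  | t'.+1 => let th := gd_iter f Jf A y eta th0 t' in
             th - eta *: ((Jf th)^T *m A^T *m resid f A y th)
  end.

Definition resid_lin (R : realType) (N n m : nat) (f : 'cV[R]_N -> 'cV[R]_n)
  (J : 'M[R]_(n, N)) (A : 'M[R]_(m, n)) (y : 'cV[R]_m) (th0 th : 'cV[R]_N)
  : 'cV[R]_m :=
  A *m f th0 + A *m (J *m (th - th0)) - y.

Fixpoint gd_lin_iter (R : realType) (N n m : nat) (f : 'cV[R]_N -> 'cV[R]_n)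
  (J : 'M[R]_(n, N)) (A : 'M[R]_(m, n)) (y : 'cV[R]_m)
  (eta : R) (th0 : 'cV[R]_N) (t : nat) : 'cV[R]_N :=
  match t with
  | 0 => th0
  | t'.+1 => let th := gd_lin_iter f J A y eta th0 t' in
             th - eta *: (J^T *m A^T *m resid_lin f J A y th0 th)
  end.

(* Main.v *)
Require Import Defs.
From HB Require Import structures.
From mathcomp Require Import all_boot all_order all_algebra.
From mathcomp Require Import all_classical all_reals all_analysis.
From mathcomp Require Import ring lra.
Set Implicit Arguments. Unset Strict Implicit. Unset Printing Implicit Defensive.
Import Order.TTheory GRing.Theory Num.Theory.
Import numFieldNormedType.Exports.
Local Open Scope classical_set_scope.
Local Open Scope ring_scope.
Section Vec.
Variable R : realType.

Definition dot k (u v : 'cV[R]_k) : R := \sum_(i < k) u i 0 * v i 0.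

Lemma dotE k (u v : 'cV[R]_k) : dot u v = (u^T *m v) 0 0.
Proof. by rewrite /dot mxE; apply: eq_bigr => i _; rewrite mxE. Qed.

Lemma dotC k (u v : 'cV[R]_k) : dot u v = dot v u.
Proof. by apply: eq_bigr => i _; rewrite mulrC. Qed.

Lemma dotDr k (u v w : 'cV[R]_k) : dot u (v + w) = dot u v + dot u w.
Proof. by rewrite /dot -big_split; apply: eq_bigr => i _; rewrite mxE mulrDr. Qed.

Lemma dotNr k (u v : 'cV[R]_k) : dot u (- v) = - dot u v.
Proof. by rewrite /dot -sumrN; apply: eq_bigr => i _; rewrite mxE mulrN. Qed.

Lemma dotBr k (u v w : 'cV[R]_k) : dot u (v - w) = dot u v - dot u w.
Proof. by rewrite dotDr dotNr. Qed.

Lemma dotZr k a (u v : 'cV[R]_k) : dot u (a *: v) = a * dot u v.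
Proof. by rewrite /dot mulr_sumr; apply: eq_bigr => i _; rewrite mxE mulrCA. Qed.

Lemma dotDl k (u v w : 'cV[R]_k) : dot (v + w) u = dot v u + dot w u.
Proof. by rewrite dotC dotDr !(dotC u). Qed.
Lemma dotBl k (u v w : 'cV[R]_k) : dot (v - w) u = dot v u - dot w u.
Proof. by rewrite dotC dotBr !(dotC u). Qed.
Lemma dotZl k a (u v : 'cV[R]_k) : dot (a *: v) u = a * dot v u.
Proof. by rewrite dotC dotZr dotC. Qed.

Lemma dot_mul p q (M : 'M[R]_(p, q)) u v : dot (M *m u) v = dot u (M^T *m v).
Proof. by rewrite !dotE trmx_mul mulmxA. Qed.

Lemma dot_ge0 k (u : 'cV[R]_k) : 0 <= dot u u.
Proof. by apply: sumr_ge0 => i _; rewrite -expr2 sqr_ge0. Qed.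

Lemma enorm_dot k (u : 'cV[R]_k) : enorm u = Num.sqrt (dot u u).
Proof. by rewrite /enorm /dot; congr Num.sqrt; apply: eq_bigr => i _; rewrite expr2. Qed.

Lemma enorm_ge0 k (u : 'cV[R]_k) : 0 <= enorm u.
Proof. by rewrite enorm_dot sqrtr_ge0. Qed.

Lemma enorm_sq k (u : 'cV[R]_k) : enorm u ^+ 2 = dot u u.
Proof. by rewrite enorm_dot sqr_sqrtr // dot_ge0. Qed.

Lemma dot0 k (u : 'cV[R]_k) : dot u u = 0 -> u = 0.
Proof.
move=> h; apply/matrixP => i j; rewrite (ord1 j) mxE.
have := h; rewrite /dot => /eqP; rewrite psumr_eq0; last first.
  by move=> l _; rewrite -expr2 sqr_ge0.
by move=> /allP /(_ i (mem_index_enum _)) /=; rewrite mulf_eq0 orbb => /eqP.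
Qed.

Lemma enorm_eq0 k (u : 'cV[R]_k) : enorm u = 0 -> u = 0.
Proof. by move=> h; apply: dot0; rewrite -enorm_sq h expr0n. Qed.

Lemma dot0r k (u : 'cV[R]_k) : dot u 0 = 0.
Proof. by rewrite /dot big1 // => i _; rewrite mxE mulr0. Qed.
Lemma dot0l k (u : 'cV[R]_k) : dot 0 u = 0.
Proof. by rewrite dotC dot0r. Qed.

Lemma CS k (u v : 'cV[R]_k) : dot u v <= enorm u * enorm v.
Proof.
have [a0|ua] := eqVneq (enorm u) 0.
  by rewrite a0 mul0r (enorm_eq0 a0) dot0l.
have [b0|vb] := eqVneq (enorm v) 0.
  by rewrite b0 mulr0 (enorm_eq0 b0) dot0r.
set a := enorm u; set b := enorm v.
have ha : 0 < a by rewrite lt0r ua enorm_ge0.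
have hb : 0 < b by rewrite lt0r vb enorm_ge0.
have := dot_ge0 (b *: u - a *: v).
rewrite !(dotBl, dotBr, dotZl, dotZr) (dotC v u) -!enorm_sq -/a -/b => h.
have hab : 0 < a * b by apply: mulr_gt0.
nra.
Qed.

Lemma enormD k (u v : 'cV[R]_k) : enorm (u + v) <= enorm u + enorm v.
Proof.
rewrite -(ler_pXn2r (n := 2)) // ?nnegrE ?addr_ge0 ?enorm_ge0 //.
rewrite enorm_sq !(dotDl, dotDr) (dotC v u) -!enorm_sq.
have := CS u v; nra.
Qed.

Lemma enormN k (u : 'cV[R]_k) : enorm (- u) = enorm u.
Proof. by rewrite !enorm_dot dotNr dotC dotNr opprK. Qed.

Lemma enormB k (u v : 'cV[R]_k) : enorm (u - v) <= enorm u + enorm v.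
Proof. by rewrite -(enormN v) enormD. Qed.

Lemma enormZ k a (u : 'cV[R]_k) : enorm (a *: u) = `|a| * enorm u.
Proof.
rewrite !enorm_dot dotZl dotZr mulrA -expr2 sqrtrM ?sqr_ge0 //.
by rewrite sqrtr_sqr.
Qed.

Lemma enorm0 k : enorm (0 : 'cV[R]_k) = 0.
Proof. by rewrite enorm_dot dot0r sqrtr0. Qed.


Lemma coord_le k (v : 'cV[R]_k) i : v i 0 ^+ 2 <= dot v v.
Proof.
rewrite /dot (bigD1 i) //= -expr2 lerDl.
by apply: sumr_ge0 => j _; rewrite -expr2 sqr_ge0.
Qed.

Definition opb p q (M : 'M[R]_(p, q)) c := forall v, enorm (M *m v) <= c * enorm v.

Lemma spec_opb p q (M : 'M[R]_(p, q)) : opb M (specnorm M).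
Proof.
set S := [set enorm (M *m v) | v in [set v : 'cV[R]_q | enorm v <= 1]].
have hS : has_ubound S.
  exists (Num.sqrt (\sum_(i < p) (\sum_(j < q) `|M i j|) ^+ 2)).
  move=> x [v /= hv <-].
  rewrite /enorm ler_sqrt; last by apply: sumr_ge0 => i _; rewrite sqr_ge0.
  apply: ler_sum => i _.
  rewrite mxE -real_normK ?num_real // ler_pXn2r // ?nnegrE ?normr_ge0 //; last first.
    by apply: sumr_ge0 => j _.
  rewrite (le_trans (ler_norm_sum _ _ _)) //; apply: ler_sum => j _.
  rewrite normrM ler_piMr //.
  have : v j 0 ^+ 2 <= 1.
    apply: (le_trans (coord_le v j)); rewrite -enorm_sq.
    by rewrite expr_le1 // ?enorm_ge0.
  by rewrite -real_normK ?num_real // expr_le1.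
move=> v.
have [e0|ev] := eqVneq (enorm v) 0.
  by rewrite e0 mulr0 (enorm_eq0 e0) mulmx0 enorm0.
have he : 0 < enorm v by rewrite lt0r ev enorm_ge0.
have := ub_le_sup hS (x := enorm (M *m ((enorm v)^-1 *: v))).
rewrite -scalemxAr enormZ ger0_norm ?invr_ge0 ?enorm_ge0 // => h.
rewrite -ler_pdivrMr // mulrC; apply: h; exists ((enorm v)^-1 *: v) => //=.
by rewrite enormZ ger0_norm ?invr_ge0 ?enorm_ge0 // mulVf.
by rewrite -scalemxAr enormZ ger0_norm ?invr_ge0 ?enorm_ge0.
Qed.

Lemma opb_le p q (M : 'M[R]_(p, q)) c c' : opb M c -> c <= c' -> opb M c'.
Proof.
move=> h hc v; apply: (le_trans (h v)); apply: ler_wpM2r => //; exact: enorm_ge0.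
Qed.

Lemma opb_mul p q r (M1 : 'M[R]_(p, q)) (M2 : 'M[R]_(q, r)) a b :
  0 <= a -> opb M1 a -> opb M2 b -> opb (M1 *m M2) (a * b).
Proof.
move=> a0 h1 h2 v; rewrite -mulmxA (le_trans (h1 _)) // -mulrA.
by apply: ler_wpM2l.
Qed.

Lemma opb_add p q (M1 M2 : 'M[R]_(p, q)) a b :
  opb M1 a -> opb M2 b -> opb (M1 + M2) (a + b).
Proof.
by move=> h1 h2 v; rewrite mulmxDl mulrDl (le_trans (enormD _ _)) // lerD.
Qed.

Lemma opb_sub p q (M1 M2 : 'M[R]_(p, q)) a b :
  opb M1 a -> opb M2 b -> opb (M1 - M2) (a + b).
Proof.
by move=> h1 h2 v; rewrite mulmxBl mulrDl (le_trans (enormB _ _)) // lerD.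
Qed.

Lemma opb_tr p q (M : 'M[R]_(p, q)) c : 0 <= c -> opb M c -> opb M^T c.
Proof.
move=> c0 h u.
have [z|nz] := eqVneq (enorm (M^T *m u)) 0.
  by rewrite z mulr_ge0 // enorm_ge0.
have hz : 0 < enorm (M^T *m u) by rewrite lt0r nz enorm_ge0.
have : enorm (M^T *m u) ^+ 2 <= enorm u * (c * enorm (M^T *m u)).
  rewrite enorm_sq -dot_mul dotC.
  apply: (le_trans (CS _ _)); apply: ler_wpM2l; [exact: enorm_ge0| exact: h].
rewrite expr2 mulrA (mulrC (enorm u)) => H.
by rewrite -(ler_pM2r hz).
Qed.

Lemma opb_ge0 p q (M : 'M[R]_(p, q)) c (v : 'cV[R]_q) :
  opb M c -> 0 < enorm v -> 0 <= c.
Proof.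
move=> h hv; have := h v; move=> /(le_trans (enorm_ge0 _)).
by rewrite pmulr_lge0.
Qed.

End Vec.


Section MVI.
Variable R : realType.

Lemma cvg_dot (U : Type) (F : set_system U) (FF : Filter F) k
  (q : U -> 'cV[R]_k) (L c : 'cV[R]_k) :
  q @ F --> L -> (fun h => dot c (q h)) @ F --> dot c L.
Proof.
move=> hq; rewrite /dot.
elim: (index_enum _) => [|i s IH].
  have -> : (fun h => \sum_(i <- [::]) c i 0 * q h i 0) = (fun=> 0).
    by apply: funext => h; rewrite big_nil.
  by rewrite big_nil; apply: cvg_cst.
have -> : (fun h => \sum_(j <- i :: s) c j 0 * q h j 0) =
   (fun h => c i 0 * q h i 0) + (fun h => \sum_(j <- s) c j 0 * q h j 0).
  by apply: funext => h; rewrite big_cons.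
rewrite big_cons; apply: cvgD => //.
apply: (@cvgM _ _ _ _ (fun=> c i 0) (fun h => q h i 0)); first exact: cvg_cst.
exact: (continuous_cvg _ (@coord_continuous R k 1 i 0 L) hq).
Qed.

Lemma line_quot (N n : nat) (f : 'cV[R]_N -> 'cV[R]_n) th D t0 :
  (fun h : R => h^-1 *: (((fun t : R => f (t *: D + th)) \o shift t0) (h *: 1)
       - (fun t : R => f (t *: D + th)) t0)) =
  (fun h : R => h^-1 *: ((f \o shift (t0 *: D + th)) (h *: D) - f (t0 *: D + th))).
Proof.
by apply: funext => h /=; rewrite [h%:A]mulr1 scalerDl addrA.
Qed.

Variables (N n : nat) (f : 'cV[R]_N -> 'cV[R]_n) (Jf : 'cV[R]_N -> 'M[R]_(n, N)).
Hypothesis hd : forall th, differentiable f th.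
Hypothesis hJ : forall th h, 'd f th h = Jf th *m h.

Lemma phi_derive (c : 'cV[R]_n) (th D : 'cV[R]_N) (t0 : R) :
  is_derive t0 1 (fun t : R => dot c (f (t *: D + th)))
    (dot c (Jf (t0 *: D + th) *m D)).
Proof.
set G := fun t : R => f (t *: D + th).
have hG : (fun h : R => h^-1 *: ((G \o shift t0) (h *: 1) - G t0)) @ 0^'
   --> Jf (t0 *: D + th) *m D.
  rewrite /G line_quot -hJ -deriveE //.
  have := (@diff_derivable _ _ _ f _ D (hd (t0 *: D + th))); rewrite /derivable /derive. by [].
have hq : (fun h : R => h^-1 *: (((fun t => dot c (G t)) \o shift t0) (h *: 1)
      - dot c (G t0))) =
     (fun h => dot c (h^-1 *: ((G \o shift t0) (h *: 1) - G t0))).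
  by apply: funext => h /=; rewrite dotZr dotBr.
have hc := cvg_dot (c := c) _ hG.
rewrite -hq in hc.
split; first by apply/cvg_ex; eexists; exact: hc.
rewrite /derive; apply: cvg_lim => //; exact: hc.
Qed.


Lemma mvi_dot (c : 'cV[R]_n) (th D : 'cV[R]_N) (K : 'M[R]_(n, N)) (b : R) :
  (forall t : R, 0 <= t <= 1 -> dot c ((Jf (t *: D + th) - K) *m D) <= b) ->
  dot c (f (D + th) - f th - K *m D) <= b.
Proof.
move=> hb.
set k := dot c (K *m D).
pose phi1 := fun t : R => dot c (f (t *: D + th)).
pose phi := phi1 - k \*: (@id R).
have dphi : forall t : R, is_derive t 1 phi (dot c (Jf (t *: D + th) *m D) - k *: 1).
  move=> t; apply: is_deriveB; first exact: phi_derive.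
have [t0 ht0 E] := @MVT_segment R phi
    (fun t => dot c (Jf (t *: D + th) *m D) - k *: 1) 0 1 ler01
    (fun t _ => dphi t)
    (derivable_within_continuous (fun t _ => @ex_derive _ _ _ _ _ _ _ (dphi t))).
have -> : dot c (f (D + th) - f th - K *m D) = phi 1 - phi 0.
  rewrite /phi /phi1 /=.
  rewrite !fctE /= scale1r scale0r add0r !dotBr /k scaler0 [_ *: 1]mulr1 subr0.
  by rewrite addrAC.
rewrite E subr0 mulr1 [_ *: 1]mulr1 /k -dotBr -mulmxBl.
exact: hb.
Qed.

Lemma mvi_norm m (A : 'M[R]_(m, n)) (th D : 'cV[R]_N) (K : 'M[R]_(n, N)) (be : R) :
  0 <= be ->
  (forall t : R, 0 <= t <= 1 -> opb (A *m (Jf (t *: D + th) - K)) be) ->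
  enorm (A *m (f (D + th) - f th - K *m D)) <= be * enorm D.
Proof.
move=> be0 hb.
set w := A *m _.
have H := @mvi_dot (A^T *m w) th D K (enorm w * (be * enorm D)).
rewrite dot_mul trmxK -/w -enorm_sq in H.
have : enorm w ^+ 2 <= enorm w * (be * enorm D).
  apply: H => t ht; rewrite dot_mul trmxK.
  apply: (le_trans (CS _ _)); apply: ler_wpM2l; first exact: enorm_ge0.
  by rewrite mulmxA; apply: hb.
have [z|nz] := eqVneq (enorm w) 0.
  by rewrite z => _; rewrite mulr_ge0 // enorm_ge0.
have hz : 0 < enorm w by rewrite lt0r nz enorm_ge0.
by rewrite expr2 ler_pM2l.
Qed.
End MVI.


Section Step.
Variable R : realType.

Lemma opbN p q (M : 'M[R]_(p, q)) c : opb M c -> opb (- M) c.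
Proof. by move=> h v; rewrite mulNmx enormN. Qed.

Lemma opb_eq p q (M M' : 'M[R]_(p, q)) c : M = M' -> opb M c -> opb M' c.
Proof. by move=> ->. Qed.

Lemma sq_le (x b : R) : 0 <= x -> 0 <= b -> x ^+ 2 <= b ^+ 2 -> x <= b.
Proof. by move=> hx hb; rewrite ler_pXn2r. Qed.

Lemma contr k p (B : 'M[R]_(k, p)) (v : 'cV[R]_k) :
  opb B 1 -> enorm (v - B *m (B^T *m v)) <= enorm v.
Proof.
move=> hB; apply: sq_le; rewrite ?enorm_ge0 //.
set x := B^T *m v.
have E1 : dot v (B *m x) = enorm x ^+ 2 by rewrite dotC dot_mul enorm_sq.
have E2 : dot (B *m x) v = enorm x ^+ 2 by rewrite dot_mul enorm_sq.
rewrite enorm_sq !(dotBl, dotBr) E1 E2 -!enorm_sq.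
have h1 := hB x.
have h2 := enorm_ge0 (B *m x).
rewrite mul1r in h1.
nra.
Qed.


Variables (N n m : nat) (f : 'cV[R]_N -> 'cV[R]_n) (Jf : 'cV[R]_N -> 'M[R]_(n, N))
  (A : 'M[R]_(m, n)) (y : 'cV[R]_m) (th0 : 'cV[R]_N) (J : 'M[R]_(n, N))
  (eps Rad : R).
Hypothesis hd : forall th, differentiable f th.
Hypothesis hJ : forall th h, 'd f th h = Jf th *m h.
Hypothesis opA : opb A 1.
Hypothesis opJ : opb J 1.
Hypothesis opJf : forall x, opb (Jf x) 1.
Hypothesis op0 : opb (Jf th0 - J) eps.
Hypothesis hball : forall x, enorm (x - th0) <= Rad -> opb (Jf x - Jf th0) (eps / 2).
Hypothesis eps0 : 0 < eps.

Lemma seg (th th' : 'cV[R]_N) t : 0 <= t <= 1 ->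
  enorm (th - th0) <= Rad -> enorm (th' - th0) <= Rad ->
  enorm (t *: (th' - th) + th - th0) <= Rad.
Proof.
move=> /andP [t0 t1] h1 h2.
have -> : t *: (th' - th) + th - th0 = t *: (th' - th0) + (1 - t) *: (th - th0).
  rewrite scalerBl scale1r !scalerBr; apply/matrixP => i j; rewrite !mxE; ring.
apply: (le_trans (enormD _ _)); rewrite !enormZ !ger0_norm ?subr_ge0 //.
by nra.
Qed.

Lemma step (th z : 'cV[R]_N) (r r' : 'cV[R]_m) :
  r = A *m f th - y ->
  z = (A *m Jf th)^T *m r ->
  r' = A *m f (th - z) - y ->
  enorm (th - th0) <= Rad -> enorm (th - z - th0) <= Rad ->
  [/\ enorm z <= enorm r,
     enorm r' ^+ 2 <= enorm r ^+ 2 - enorm z ^+ 2 + 2 * eps * enorm r * enorm z,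
     forall rt : 'cV[R]_m,
       enorm ((rt - (A *m J) *m ((A *m J)^T *m rt)) - r')
         <= enorm (rt - r) + 3 * eps * enorm r
   & forall (tth : 'cV[R]_N) (rt : 'cV[R]_m),
       enorm ((tth - (A *m J)^T *m rt) - (th - z))
         <= enorm (tth - th) + enorm (rt - r) + 3 * eps / 2 * enorm r].
Proof.
move=> er ez er' h1 h2.
set D := - z.
have eD : th - z = D + th by rewrite addrC.
set B0 := A *m Jf th0; set B := A *m J; set B2 := A *m Jf th.
have opB2 : opb B2 1 by rewrite -(mulr1 1); apply: opb_mul.
have opB : opb B 1 by rewrite -(mulr1 1); apply: opb_mul.
have hz : enorm z <= enorm r.
  by rewrite ez -[X in _ <= X]mul1r; apply: (opb_tr ler01 opB2).
have hseg : forall t : R, 0 <= t <= 1 -> enorm (t *: D + th - th0) <= Rad.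
  move=> t ht; have := seg ht h1 h2.
  by rewrite [th - z - th]addrAC subrr add0r.
set u := A *m (f (D + th) - f th).
set v2 := A *m (f (D + th) - f th - Jf th0 *m D).
have F1 : enorm u <= enorm z.
  have := @mvi_norm R N n f Jf hd hJ m A th D 0 1 ler01.
  rewrite mul0mx subr0 mul1r enormN; apply => t ht.
  by rewrite subr0 -(mulr1 1); apply: opb_mul.
have F2 : enorm v2 <= eps / 2 * enorm z.
  have := @mvi_norm R N n f Jf hd hJ m A th D (Jf th0) (eps / 2).
  rewrite enormN; apply; first by rewrite divr_ge0 // ltW.
  move=> t ht; rewrite -(mul1r (eps / 2)); apply: opb_mul => //.
  exact: hball (hseg t ht).
have Er' : r' = r + u.
  rewrite er' er /u eD mulmxBr; apply/matrixP => i j; rewrite !mxE; ring.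
have Ev2 : v2 = u + B0 *m z.
  rewrite /v2 /u /B0 /D mulmxN opprK mulmxDr -mulmxA.
  by rewrite mulmxBr.
have ez2 : z = B2^T *m r by [].
have opB02 : opb (B0 - B2)^T (eps / 2).
  apply: opb_tr; first by rewrite divr_ge0 // ltW.
  apply: (opb_eq (M := A *m (- (Jf th - Jf th0)))).
    by rewrite /B0 /B2 opprB mulmxBr.
  rewrite -(mul1r (eps / 2)); apply: opb_mul => //; apply: opbN; exact: hball.
have opBB0 : opb (B - B0) eps.
  apply: (opb_eq (M := A *m (- (Jf th0 - J)))).
    by rewrite /B0 /B opprB mulmxBr.
  rewrite -(mul1r eps); apply: opb_mul => //; apply: opbN; exact: op0.
have opBB2 : opb (B - B2)^T (eps / 2 + eps).
  apply: opb_tr; first by rewrite addr_ge0 // ?divr_ge0 // ltW.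
  apply: (opb_eq (M := A *m (- ((Jf th - Jf th0) + (Jf th0 - J))))).
    by rewrite /B /B2 addrA subrK opprB mulmxBr.
  rewrite -(mul1r (eps / 2 + eps)); apply: opb_mul => //; apply: opbN.
  by apply: opb_add; [exact: hball|exact: op0].
have CSN : forall k (a b : 'cV[R]_k), - dot a b <= enorm a * enorm b.
  move=> k a b; rewrite -(enormN a); apply: le_trans (CS _ _).
  by rewrite (dotC (- a)) dotNr dotC.
split => //.
-
  have Edra : dot r (B0 *m z) = enorm z ^+ 2 + dot ((B0 - B2)^T *m r) z.
    rewrite dotC dot_mul dotC enorm_sq linearB /= mulmxBl dotBl -ez2; ring.
  have Edu : dot r u = dot r v2 - dot r (B0 *m z) by rewrite Ev2 dotDr addrK.
  have hA : dot r v2 <= enorm r * (eps / 2 * enorm z).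
    exact: le_trans (CS r v2) (ler_wpM2l (enorm_ge0 r) F2).
  have hB := CSN _ ((B0 - B2)^T *m r) z.
  have hB2 := opB02 r.
  have hu2 : enorm u ^+ 2 <= enorm z ^+ 2.
    by rewrite ler_pXn2r // ?nnegrE ?enorm_ge0.
  have hB3 : enorm ((B0 - B2)^T *m r) * enorm z <= eps / 2 * enorm r * enorm z.
    by apply: ler_wpM2r => //; exact: enorm_ge0.
  rewrite Er' enorm_sq dotDl !dotDr (dotC u r) Edu Edra -!enorm_sq.
  nra.
-
  move=> rt.
  have Eu : u = v2 - B0 *m z by rewrite Ev2 addrK.
  have -> : rt - B *m (B^T *m rt) - r' = ((rt - r) - B *m (B^T *m (rt - r)))
      - (v2 + (B - B0) *m z + B *m ((B - B2)^T *m r)).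
    have eT : (B - B2)^T = B^T - B2^T by rewrite linearB.
    rewrite Er' Eu eT !mulmxBl -ez2 !mulmxBr.
    apply/matrixP => i j; rewrite !mxE; ring.
  apply: (le_trans (enormB _ _)).
  have c1 := contr (rt - r) opB.
  have c2 := enormD (v2 + (B - B0) *m z) (B *m ((B - B2)^T *m r)).
  have c3 := enormD v2 ((B - B0) *m z).
  have c4 := opBB0 z.
  have c5 := opB ((B - B2)^T *m r).
  have c6 := opBB2 r.
  have c7 := enorm_ge0 r.
  have c8 := enorm_ge0 z.
  have hz2 : eps * enorm z <= eps * enorm r by apply: ler_wpM2l => //; exact: ltW.
  rewrite mul1r in c5. nra.
-
  move=> tth rt.
  have eT : (B - B2)^T = B^T - B2^T by rewrite linearB.
  have -> : tth - B^T *m rt - (th - z) =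
      (tth - th) - B^T *m (rt - r) - (B - B2)^T *m r.
    rewrite eT mulmxBl -ez2 mulmxBr.
    apply/matrixP => i j; rewrite !mxE; ring.
  have c1 := enormB (tth - th - B^T *m (rt - r)) ((B - B2)^T *m r).
  have c2 := enormB (tth - th) (B^T *m (rt - r)).
  have c3 := opb_tr ler01 opB (rt - r).
  have c6 := opBB2 r.
  rewrite mul1r in c3.
  have -> : 3 * eps / 2 = eps / 2 + eps by field.
  lra.
Qed.

End Step.

Section Arith.
Variable R : realType.

Lemma arA (e s : R) : 0 < e -> 0 <= s -> (s + 1) * e ^+ 2 <= 1 / 2 ->
  (1 + e ^+ 2) * (1 + s * e ^+ 2 + s ^+ 2 * e ^+ 4) <=
  1 + (s + 1) * e ^+ 2 + (s + 1) ^+ 2 * e ^+ 4.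
Proof.
move=> e0 s0 h.
have h1 : s * e ^+ 2 <= 1 / 2 by nra.
have h2 : 0 <= s * e ^+ 4 by rewrite mulr_ge0 // exprn_ge0 // ltW.
nra.
Qed.

Lemma arA2 (e s : R) : 0 <= s -> s * e ^+ 2 <= 1 / 2 ->
  1 + s * e ^+ 2 + s ^+ 2 * e ^+ 4 <= 16 / 9.
Proof.
move=> s0 h.
have h0 : 0 <= s * e ^+ 2 by rewrite mulr_ge0 // sqr_ge0.
have -> : s ^+ 2 * e ^+ 4 = (s * e ^+ 2) ^+ 2 by rewrite exprMn -exprM.
nra.
Qed.

Lemma arB (P Q a s : R) : 0 <= s -> 0 <= Q -> 0 <= P -> P ^+ 2 <= s * Q ->
  (P + a) ^+ 2 <= (s + 1) * (Q + a ^+ 2).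
Proof.
move=> s0 Q0 P0 h.
have key : 2 * P * a <= Q + s * a ^+ 2.
  have [s00|sp] := eqVneq s 0.
    rewrite s00 mul0r in h; have P00 : P = 0 by nra.
    by rewrite P00 s00 !mul0r mulr0 mul0r addr0.
  have spos : 0 < s by rewrite lt0r sp.
  have k2 : s * (2 * P * a) <= s * (Q + s * a ^+ 2).
    have := sqr_ge0 (P - s * a); nra.
  by rewrite -(ler_pM2l spos).
nra.
Qed.

Lemma arBall (P Q x s t q e rho Rad : R) : 0 <= s -> s <= t -> 0 <= q ->
  q ^+ 2 = t -> t ^+ 2 <= t ^+ 2 * q -> 0 <= e -> 0 <= rho ->
  0 <= P -> 0 <= Q -> P ^+ 2 <= s * Q -> Q + x <= rho ^+ 2 * (1 + 4 * e * s) -> 0 <= x ->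
  2 * rho * (q + 2 * e * t ^+ 2) <= Rad -> P <= Rad / 2.
Proof.
move=> s0 st q0 qt ht e0 r0 P0 Q0 hP hQ x0 hR.
have h1 : s * Q <= t * (rho ^+ 2 * (1 + 4 * e * t)).
  have hQ' : Q <= rho ^+ 2 * (1 + 4 * e * s) by lra.
  have r2 : 0 <= rho ^+ 2 by rewrite sqr_ge0.
  have m1 : s * Q <= s * (rho ^+ 2 * (1 + 4 * e * s)) by apply: ler_wpM2l.
  have m2 : s * (1 + 4 * e * s) <= t * (1 + 4 * e * t).
    have ss : s * s <= t * t by nra.
    have : e * (s * s) <= e * (t * t) by apply: ler_wpM2l.
    nra.
  apply: (le_trans m1); rewrite mulrCA [t * _]mulrCA.
  by apply: ler_wpM2l.
have h2 : t * (rho ^+ 2 * (1 + 4 * e * t)) <= (rho * (q + 2 * e * t ^+ 2)) ^+ 2.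
  have a1 : (rho * (q + 2 * e * t ^+ 2)) ^+ 2 =
      rho ^+ 2 * (t + 4 * e * (t ^+ 2 * q) + 4 * e ^+ 2 * t ^+ 4).
    by rewrite -qt; ring.
  rewrite a1 mulrCA; apply: ler_wpM2l; first exact: sqr_ge0.
  have : e * t ^+ 2 <= e * (t ^+ 2 * q) by apply: ler_wpM2l.
  have t0 : 0 <= t by lra.
  have : 0 <= e ^+ 2 * t ^+ 4 by rewrite mulr_ge0 // exprn_ge0.
  nra.
have K0 : 0 <= rho * (q + 2 * e * t ^+ 2).
  have t0 : 0 <= t by lra.
  by rewrite mulr_ge0 // addr_ge0 // !mulr_ge0 // exprn_ge0.
have : P <= rho * (q + 2 * e * t ^+ 2).
  by rewrite -(ler_pXn2r (n := 2)) // ?nnegrE //; lra.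
lra.
Qed.
End Arith.


Unset Implicit Arguments.
Theorem corollary3p1 (R : realType) (N n m : nat)
  (f : 'cV[R]_N -> 'cV[R]_n) (Jf : 'cV[R]_N -> 'M[R]_(n, N))
  (A : 'M[R]_(m, n)) (y : 'cV[R]_m) (th0 : 'cV[R]_N) (J : 'M[R]_(n, N))
  (eps Rad : R) (T : nat) :
  (forall th : 'cV[R]_N, differentiable f th) ->
  (forall th h : 'cV[R]_N, 'd f th h = Jf th *m h) ->
  continuous Jf ->
  specnorm A <= 1 ->
  specnorm J <= 1 -> (forall th, specnorm (Jf th) <= 1) ->
  specnorm (Jf th0 - J) <= eps ->
  specnorm (Jf th0 *m (Jf th0)^T - J *m J^T) <= eps ^+ 2 ->
  0 < eps -> 0 < Rad ->
  (forall th, enorm (th - th0) <= Rad -> specnorm (Jf th - Jf th0) <= eps / 2) ->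
  eps <= 1 ->
  T%:R <= 1 / (2 * eps ^+ 2) ->
  2 * enorm (resid f A y th0) * (Num.sqrt T%:R + 2 * eps * T%:R ^+ 2) <= Rad ->
  forall tau : nat, (tau <= T)%N ->
    let th := gd_iter f Jf A y 1 th0 in
    let tth := gd_lin_iter f J A y 1 th0 in
    [/\ enorm (th tau - th0) <= Rad / 2,
        enorm (resid_lin f J A y th0 (tth tau) - resid f A y (th tau))
          <= 4 * eps * tau%:R * enorm (resid f A y th0)
      & enorm (tth tau - th tau)
          <= 2 * eps * tau%:R ^+ 2 * enorm (resid f A y th0)].
Proof.
move=> hd hJ _ hA hJ1 hJf h01 _ e0 R0 hb3 _ hT hR tau htau th tth.
have opA : opb A 1 := opb_le (spec_opb A) hA.
have opJ : opb J 1 := opb_le (spec_opb J) hJ1.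
have opJf : forall x, opb (Jf x) 1 := fun x => opb_le (spec_opb (Jf x)) (hJf x).
have op0 : opb (Jf th0 - J) eps := opb_le (spec_opb _) h01.
have hball : forall x, enorm (x - th0) <= Rad -> opb (Jf x - Jf th0) (eps / 2).
  by move=> x hx; apply: opb_le (spec_opb _) (hb3 x hx).
set rho := enorm (resid f A y th0).
have rho0 : 0 <= rho by exact: enorm_ge0.
set q := Num.sqrt (T%:R : R).
have q0 : 0 <= q by exact: sqrtr_ge0.
have qT : q ^+ 2 = T%:R by rewrite sqr_sqrtr.
have hq : T%:R ^+ 2 <= T%:R ^+ 2 * q :> R.
  have [->|Tn0] := eqVneq T 0%N; first by rewrite expr0n /= !mul0r.
  have T1 : 1 <= T%:R :> R by rewrite ler1n lt0n.
  have q1 : 1 <= q by nra.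
  by rewrite ler_peMr // sqr_ge0.
have hTe : T%:R * eps ^+ 2 <= 1 / 2.
  have e2 : 0 < 2 * eps ^+ 2 by rewrite mulr_gt0 // exprn_gt0.
  rewrite -(ler_pM2r e2) in hT; rewrite mulrA in hT.
  rewrite divfK ?gt_eqF // in hT. nra.
pose r s := resid f A y (th s).
pose rt s := resid_lin f J A y th0 (tth s).
have Eth : forall s, th s.+1 = th s - (A *m Jf (th s))^T *m r s.
  by move=> s; rewrite /th /= scale1r trmx_mul.
have Ett : forall s, tth s.+1 = tth s - (A *m J)^T *m rt s.
  by move=> s; rewrite /tth /= scale1r trmx_mul.
have Erl : forall x w, resid_lin f J A y th0 (x - (A *m J)^T *m w) =
    resid_lin f J A y th0 x - (A *m J) *m ((A *m J)^T *m w).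
  move=> x w; rewrite /resid_lin !mulmxBr !mulmxA.
  apply/matrixP => i j; rewrite !mxE; ring.
have Ert : forall s, rt s.+1 = rt s - (A *m J) *m ((A *m J)^T *m rt s).
  by move=> s; rewrite /rt Ett Erl.
have inv : forall s, (s <= T)%N ->
  [/\ enorm (r s) ^+ 2 <= (1 + s%:R * eps ^+ 2 + s%:R ^+ 2 * eps ^+ 4) * rho ^+ 2,
      exists P Q, [/\ 0 <= P, 0 <= Q, enorm (th s - th0) <= P, P ^+ 2 <= s%:R * Q &
                   Q + enorm (r s) ^+ 2 <= rho ^+ 2 * (1 + 4 * eps * s%:R)],
      enorm (rt s - r s) <= 4 * eps * s%:R * rho &
      enorm (tth s - th s) <= 2 * eps * s%:R ^+ 2 * rho].
  elim => [_|s IH hs].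
    have Er0 : rt 0%N = r 0%N.
      by rewrite /rt /r /= /resid_lin subrr !mulmx0 addr0.
    have hr0 : enorm (r 0%N) = rho by [].
    rewrite Er0 hr0 subrr enorm0; split.
    - by rewrite expr0n /= !mul0r !addr0 mul1r.
    - exists 0, 0; split; rewrite ?expr0n /= ?mul0r ?mulr0 ?addr0 ?add0r ?mulr1 ?lexx //.
    - by rewrite subrr enorm0 !mulr0 mul0r.
    - by rewrite expr0n /= !mulr0 mul0r.
  have [ha [P [Q [P0 Q0 hP hPQ hQ]]] hdd hee] := IH (ltnW hs).
  set z := (A *m Jf (th s))^T *m r s.
  have opB2 : opb (A *m Jf (th s)) 1 by rewrite -(mulr1 1); apply: opb_mul.
  have hz : enorm z <= enorm (r s).
    by rewrite -[X in _ <= X]mul1r; apply: (opb_tr ler01 opB2).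
  have sR : s.+1%:R = s%:R + 1 :> R by rewrite natr1.
  have s0 : 0 <= s%:R :> R by [].
  have hsT : s%:R + 1 <= T%:R :> R by rewrite natr1 ler_nat.
  have hse : (s%:R + 1) * eps ^+ 2 <= 1 / 2.
    apply: le_trans hTe; apply: ler_wpM2r => //; exact: sqr_ge0.
  have hse0 : s%:R * eps ^+ 2 <= 1 / 2.
    have : 0 <= eps ^+ 2 by exact: sqr_ge0.
    nra.
  have rn0 := enorm_ge0 (r s).
  have zn0 := enorm_ge0 z.
  have hz2 : enorm z ^+ 2 <= enorm (r s) ^+ 2 by rewrite ler_pXn2r // ?nnegrE.
  have ball_s : enorm (th s - th0) <= Rad / 2.
    apply: le_trans hP _.
    apply: (arBall (x := enorm (r s) ^+ 2) (t := T%:R) s0 _ q0 qT hq (ltW e0) rho0 P0 Q0 hPQ hQ) => //.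
    - lra.
    - exact: sqr_ge0.
  have hP' : enorm (th s - z - th0) <= P + enorm z.
    rewrite addrAC; apply: (le_trans (enormB _ _)); lra.
  have hPQ' := arB (enorm z) s0 Q0 P0 hPQ.
  have ball_s' : P + enorm z <= Rad / 2.
    apply: (arBall (Q := Q + enorm z ^+ 2) (x := 0) (s := s%:R + 1) (t := T%:R) _ hsT q0 qT hq (ltW e0) rho0 _ _ hPQ') => //.
    - lra.
    - by rewrite addr_ge0 // sqr_ge0.
    - have : 0 <= eps * rho ^+ 2 by rewrite mulr_ge0 ?sqr_ge0 // ltW.
      nra.
  have hRad : Rad / 2 <= Rad by lra.
  have [_ hr' hd' he'] := step hd hJ opA opJ opJf op0 hball e0
      (th := th s) (z := z) (r := r s) (r' := r s.+1) erefl erefl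
      (ltac:(by rewrite /r Eth)) (le_trans ball_s hRad)
      (le_trans hP' (le_trans ball_s' hRad)).
  have r2 : enorm (r s) ^+ 2 <= 16 / 9 * rho ^+ 2.
    apply: le_trans ha _; apply: ler_wpM2r; [exact: sqr_ge0|exact: arA2].
  have hr4 : enorm (r s) <= 4 / 3 * rho.
    apply: sq_le => //; first by rewrite mulr_ge0.
    by rewrite exprMn; apply: le_trans r2 _; rewrite ler_wpM2r ?sqr_ge0 //; lra.
  have ee : 0 <= eps := ltW e0.
  rewrite sR; split.
  - have h1 : enorm (r s.+1) ^+ 2 <= (1 + eps ^+ 2) * enorm (r s) ^+ 2.
      apply: le_trans hr' _; have := sqr_ge0 (enorm z - eps * enorm (r s)); nra.
    apply: le_trans h1 _.
    have h2 := arA e0 s0 hse.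
    have h3 : (1 + eps ^+ 2) * enorm (r s) ^+ 2 <=
        (1 + eps ^+ 2) * ((1 + s%:R * eps ^+ 2 + s%:R ^+ 2 * eps ^+ 4) * rho ^+ 2).
      by apply: ler_wpM2l => //; rewrite addr_ge0 // sqr_ge0.
    apply: le_trans h3 _; rewrite mulrA; apply: ler_wpM2r => //; exact: sqr_ge0.
  - exists (P + enorm z), (Q + enorm z ^+ 2); split.
    + by rewrite addr_ge0.
    + by rewrite addr_ge0 // sqr_ge0.
    + by rewrite Eth.
    + exact: hPQ'.
    + have h4 : enorm (r s) * enorm z <= enorm (r s) ^+ 2.
        by rewrite expr2; apply: ler_wpM2l.
      have h5 : eps * (enorm (r s) * enorm z) <= eps * (16 / 9 * rho ^+ 2).
        by apply: ler_wpM2l => //; apply: le_trans h4 r2.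
      have h6 : 0 <= eps * rho ^+ 2 by rewrite mulr_ge0 // sqr_ge0.
      nra.
  - rewrite Ert; apply: le_trans (hd' (rt s)) _.
    have : eps * enorm (r s) <= eps * (4 / 3 * rho) by apply: ler_wpM2l.
    nra.
  - rewrite Ett Eth; apply: le_trans (he' (tth s) (rt s)) _.
    have : eps * enorm (r s) <= eps * (4 / 3 * rho) by apply: ler_wpM2l.
    nra.
have [_ [P [Q [P0 Q0 hP hPQ hQ]]] hdd hee] := inv tau htau.
split => //.
apply: le_trans hP _.
apply: (arBall (x := enorm (r tau) ^+ 2) (t := T%:R) _ _ q0 qT hq (ltW e0) rho0 P0 Q0 hPQ hQ) => //.
- by rewrite ler_nat.
- exact: sqr_ge0.
Qed.
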